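(* Let $\mathfrak g$ be of type $A_2$, $\lambda,\mu\in P^+$, and let $\mathbf s\in\mathbb Z_+^3$ with $\mathbf s\notin\mathcal S^{A}_{\lambda,\mu}$. Then there exist finitely many $\mathbf s'\in\mathbb Z_+^3$ with $\mathbf s'\prec\mathbf s$ and elements $c_{\mathbf s'}\in\mathbf U(\mathfrak n^-\otimes1)$ such that in $\mathcal F_{\lambda,\mu}$ $$\Big(X_{\mathbf s}+\sum_{\mathbf s'\prec\mathbf s}c_{\mathbf s'}X_{\mathbf s'}\Big)v=0.$$
   Context: $\mathfrak g$ is the simple Lie algebra of type $A_2$ with Cartan subalgebra $\mathfrak h$, simple roots $\alpha_1,\alpha_2$, coroots $h_1,h_2$, positive roots $R^+$ written $(r_1,r_2)$ for $r_1\alpha_1+r_2\alpha_2$ (namely $(1,0),(0,1),(1,1)$), coroots $h_\alpha$, Chevalley basis $\{x^\pm_\alpha,h_i\}$, $\mathfrak n^\pm=\mathrm{span}\{x^\pm_\alpha\}$, dominant weights $P^+$; $m_i=\lambda(h_i)$, $n_i=\mu(h_i)$; $x^{(s)}=x^s/s!$. $\mathcal F_{\lambda,\mu}$ is the cyclic $\mathbf U(\mathfrak g\otimes\mathbb C[t])$-module generated by $v\ne0$ with relations $(\mathfrak n^+\otimes\mathbb C[t])v=0$; $(h\otimes t^r)v=\delta_{r,0}(\lambda+\mu)(h)v$ ($h\in\mathfrak h$); and for $\alpha\in R^+$: $(x^-_\alpha\otimes1)^{(\lambda+\mu)(h_\alpha)+1}v=0$, $(x^-_\alpha\otimes t)^{\min\{\lambda(h_\alpha),\mu(h_\alpha)\}+1}v=0$,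 $(x^-_\alpha\otimes t^r)v=0$ for $r\ge2$. $X_{(a,b,c)}=(x^-_{(1,0)}\otimes t)^{(a)}(x^-_{(1,1)}\otimes t)^{(b)}(x^-_{(0,1)}\otimes t)^{(c)}$. $\mathcal S^{A}_{\lambda,\mu}=\{(a,b,c)\in\mathbb Z_+^3: a\le\min\{m_1,n_1\},\ c\le\min\{m_2,n_2\},\ a+b+c\le\min\{m_1+m_2,n_1+n_2\},\ 2a+b\le m_1+n_1,\ 2c+b\le m_2+n_2\}$. Total order on $\mathbb Z_+^3$: $(a,b,c)\succ(a',b',c')$ iff $c<c'$, or $c=c'$ and $a<a'$, or $c=c'$, $a=a'$ and $b<b'$. *)

(* Defs.v *)
From HB Require Import structures.
From mathcomp Require Import all_boot all_order all_algebra algC.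
Set Implicit Arguments. Unset Strict Implicit. Unset Printing Implicit Defensive.
Import Order.TTheory GRing.Theory Num.Theory.
Local Open Scope ring_scope.

(* The current algebra  g (x) C[t]  with g = sl_3 = type A_2 is realized as
   sl_3(C[t]) : 3x3 matrices with entries in C[t] (= algC polynomials) and
   zero trace; the Lie bracket is the matrix commutator. *)
Definition Lt := 'M[{poly algC}]_3.
Definition in_gt (a : Lt) : Prop := \tr a = 0.

Definition E (i j : 'I_3) (r : nat) : Lt := 'X^r *: delta_mx i j.

(* Chevalley basis (up to signs irrelevant here): simple roots alpha1 = (1,0),
   alpha2 = (0,1), alpha1+alpha2 = (1,1).
   x^+_(1,0) = E01, x^+_(0,1) = E12, x^+_(1,1) = E02 ; x^- = transposes;
   h_1 = E00 - E11, h_2 = E11 - E22. *)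
Definition xm10 r := E 1 0 r.
Definition xm01 r := E 2 1 r.
Definition xm11 r := E 2 0 r.
Definition h1 r := E 0 0 r - E 1 1 r.
Definition h2 r := E 1 1 r - E 2 2 r.

Record is_rep (V : lmodType algC) (rho : Lt -> V -> V) : Prop := {
  rep_linv : forall a, in_gt a -> forall (c : algC) (u w : V),
      rho a (c *: u + w) = c *: rho a u + rho a w;
  rep_lina : forall a b, in_gt a -> in_gt b -> forall (c : algC) (u : V),
      rho (c%:P *: a + b) u = c *: rho a u + rho b u;
  rep_bracket : forall a b, in_gt a -> in_gt b -> forall u : V,
      rho (a *m b - b *m a) u = rho a (rho b u) - rho b (rho a u)
}.

Definition dpow (V : lmodType algC) (rho : Lt -> V -> V) (x : Lt) (s : nat)
  (u : V) : V := (s`!%:R : algC)^-1 *: iter s (rho x) u.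

(* relations attached to a positive root alpha, given by x^-_alpha (x) t^r =
   xm r, with l = lambda(h_alpha), k = mu(h_alpha) *)
Definition root_rel (V : lmodType algC) (rho : Lt -> V -> V) (xm : nat -> Lt)
  (l k : nat) (v : V) : Prop :=
  [/\ dpow rho (xm 0%N) (l + k).+1 v = 0,
      dpow rho (xm 1%N) (minn l k).+1 v = 0 &
      forall r, (2 <= r)%N -> rho (xm r) v = 0].

(* The defining relations of F_{lambda,mu} on the vector v, where
   lambda = (m1,m2), mu = (n1,n2) in fundamental-weight coordinates. *)
Definition F_rel (m1 m2 n1 n2 : nat) (V : lmodType algC)
  (rho : Lt -> V -> V) (v : V) : Prop :=
  [/\ forall (i j : 'I_3) r, (i < j)%N -> rho (E i j r) v = 0,
      forall r, rho (h1 r) v = (if r == 0%N then (m1 + n1)%:R else 0) *: v,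
      forall r, rho (h2 r) v = (if r == 0%N then (m2 + n2)%:R else 0) *: v &
      [/\ root_rel rho xm10 m1 n1 v,
           root_rel rho xm01 m2 n2 v &
           root_rel rho xm11 (m1 + m2) (n1 + n2) v]].

Definition Xs (V : lmodType algC) (rho : Lt -> V -> V) (s : nat * nat * nat)
  (v : V) : V :=
  let: (a, b, c) := s in
  dpow rho (xm10 1) a (dpow rho (xm11 1) b (dpow rho (xm01 1) c v)).

(* Elements of U(n^- (x) 1): finite linear combinations of words in the
   generators x^-_alpha (x) 1 (index 0 -> (1,0), 1 -> (0,1), 2 -> (1,1)). *)
Definition nm_gen (i : 'I_3) : Lt :=
  if val i == 0%N then xm10 0 else if val i == 1%N then xm01 0 else xm11 0.
Definition Unm := seq (algC * seq 'I_3).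
Definition word_act (V : lmodType algC) (rho : Lt -> V -> V) (w : seq 'I_3)
  (u : V) : V := foldr (fun i u' => rho (nm_gen i) u') u w.
Definition Unm_act (V : lmodType algC) (rho : Lt -> V -> V) (c : Unm) (u : V)
  : V := \sum_(p <- c) p.1 *: word_act rho p.2 u.

Definition inSA (m1 m2 n1 n2 : nat) (s : nat * nat * nat) : bool :=
  let: (a, b, c) := s in
  [&& (a <= minn m1 n1)%N, (c <= minn m2 n2)%N,
      (a + b + c <= minn (m1 + m2) (n1 + n2))%N,
      (2 * a + b <= m1 + n1)%N & (2 * c + b <= m2 + n2)%N].

Definition succ3 (s s' : nat * nat * nat) : bool :=
  let: (a, b, c) := s in let: (a', b', c') := s' in
  [|| (c < c')%N, (c == c') && (a < a')%N | [&& c == c', a == a' & (b < b')%N]].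
Definition prec3 (s' s : nat * nat * nat) : bool := succ3 s s'.

(* Main.v *)
Require Import Defs.
From HB Require Import structures.
From mathcomp Require Import all_boot all_order all_algebra algC ring zify.
Import GRing.Theory Num.Theory.
Local Open Scope ring_scope.

Section Gen.
Variable V : lmodType algC.
Definition lin (P : V -> V) := forall (c : algC) x y, P (c *: x + y) = c *: P x + P y.

Lemma lin0 P : lin P -> P 0 = 0.
Proof.
move=> hP; have h := hP 1 0 0; rewrite scaler0 addr0 scale1r in h.
by move: (congr1 (fun x => x - P 0) h); rewrite subrr addrK => <-.
Qed.
Lemma linD P : lin P -> forall x y, P (x + y) = P x + P y.
Proof. by move=> hP x y; have := hP 1 x y; rewrite !scale1r. Qed.
Lemma linZ P : lin P -> forall c x, P (c *: x) = c *: P x.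
Proof. by move=> hP c x; have := hP c x 0; rewrite !addr0 lin0 // addr0. Qed.
Lemma linN P : lin P -> forall x, P (- x) = - P x.
Proof. by move=> hP x; rewrite -scaleN1r linZ // scaleN1r. Qed.
Lemma linB P : lin P -> forall x y, P (x - y) = P x - P y.
Proof. by move=> hP x y; rewrite linD // linN. Qed.
Lemma lin_sum P : lin P -> forall (I : Type) (r : seq I) (F : I -> V),
  P (\sum_(i <- r) F i) = \sum_(i <- r) P (F i).
Proof.
move=> hP I r F; elim: r => [|x r IH]; first by rewrite !big_nil lin0.
by rewrite !big_cons linD // IH.
Qed.
Lemma lin_iter P n : lin P -> lin (iter n P).
Proof.
move=> hP; elim: n => [|n IH] c x y //=.
by rewrite IH hP.
Qed.
Lemma iter_comm (P Q : V -> V) n : (forall y, P (Q y) = Q (P y)) -> forall y, P (iter n Q y) = iter n Q (P y).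
Proof. by move=> h; elim: n => [|n IH] y //=; rewrite h IH. Qed.
Lemma iter_fix0 (P : V -> V) n : P 0 = 0 -> iter n P 0 = 0.
Proof. by move=> h; elim: n => [|n IH] //=; rewrite IH h. Qed.

Arguments lin0 {P}. Arguments linD {P}. Arguments linZ {P}. Arguments linN {P}.
Arguments linB {P}. Arguments lin_sum {P}. Arguments lin_iter {P n}.
Arguments iter_comm {P Q n}. Arguments iter_fix0 {P n}.
Lemma PQk (P Q R : V -> V) : lin Q ->
  (forall y, P (Q y) = Q (P y) + R y) -> (forall y, R (Q y) = Q (R y)) ->
  forall k y, P (iter k Q y) = iter k Q (P y) + k%:R *: iter k.-1 Q (R y).
Proof.
move=> hQ hPQ hRQ; elim=> [|k IH] y /=; first by rewrite scale0r addr0.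
rewrite hPQ IH linD // linZ // (iter_comm hRQ).
case: k IH => [|k] IH /=; first by rewrite scale0r addr0 scale1r.
by rewrite -addrA -{2}(scale1r (Q (iter k Q (R y)))) -scalerDl natr1.
Qed.

Arguments PQk {P Q R}.
Lemma expand (P Q R : V -> V) : lin P -> lin Q -> lin R ->
  (forall y, P (Q y) = Q (P y) + R y) -> (forall y, R (Q y) = Q (R y)) ->
  (forall y, P (R y) = R (P y)) ->
  forall n k y, iter n P (iter k Q y) =
    \sum_(j < n.+1) ('C(n, j) * k ^_ j)%:R *: iter (k - j) Q (iter j R (iter (n - j) P y)).
Proof.
move=> hP hQ hR hPQ hRQ hPR; elim=> [|n IH] k y.
  by rewrite big_ord1 /= bin0 ffactn0 scale1r subn0.
rewrite iterSr (PQk hQ hPQ hRQ) (linD (lin_iter hP)) (linZ (lin_iter hP)) !IH.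
rewrite big_ord_recl [in RHS]big_ord_recl /= bin0 !ffactn0 !mul1n subn0 /bump /=.
rewrite !scale1r -iterSr -iterS -!addrA; congr (_ + _); first by rewrite subn0.
under [in RHS]eq_bigr => j _ do rewrite add1n add0n binS mulnDl natrD scalerDl.
rewrite big_split /=; congr (_ + _).
  rewrite big_ord_recr /= bin_small // mul0n scale0r addr0.
  apply: eq_bigr => j _; rewrite add1n add0n subSS -iterSr.
  by rewrite subnSK.
rewrite scaler_sumr; apply: eq_bigr => j _.
rewrite scalerA -natrM mulnCA -ffactnS.
rewrite -(iter_comm (fun y => esym (hPR y))) -iterSr iterS; congr (_ *: iter _ Q _).
by rewrite -subn1 -subnDA add1n.
Qed.

Lemma sc3 (z : V) (a c : algC) : a - 1 - 1 = c -> a *: z - z - z = c *: z.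
Proof. by move<-; rewrite !scalerBl scale1r. Qed.
Lemma sc3' (z : V) (c : algC) : - 1 - 1 = c -> 0 - z - z = c *: z.
Proof. by move<-; rewrite !scalerBl scaleN1r scale1r sub0r. Qed.

Section Garland.
Variables (Eo Ho Fo fo H2 f3 f4 : V -> V) (v : V).
Hypotheses (lE : lin Eo) (lH : lin Ho) (lF : lin Fo) (lf : lin fo) (lH2 : lin H2)
  (lf3 : lin f3) (lf4 : lin f4).
Hypotheses (cEF : forall w, Eo (Fo w) = Fo (Eo w) + Ho w)
  (cHF : forall w, Ho (Fo w) = Fo (Ho w) - fo w - fo w)
  (cfF : forall w, fo (Fo w) = Fo (fo w))
  (cEf : forall w, Eo (fo w) = fo (Eo w) + H2 w)
  (cH2f : forall w, H2 (fo w) = fo (H2 w) - f4 w - f4 w)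
  (cHf : forall w, Ho (fo w) = fo (Ho w) - f3 w - f3 w)
  (c3f : forall w, f3 (fo w) = fo (f3 w))
  (c4f : forall w, f4 (fo w) = fo (f4 w))
  (kE : Eo v = 0) (kH : Ho v = 0) (kH2 : H2 v = 0) (k3 : f3 v = 0) (k4 : f4 v = 0).

Lemma gar_k r : [/\ f4 (iter r fo v) = 0, f3 (iter r fo v) = 0, H2 (iter r fo v) = 0,
   Ho (iter r fo v) = 0 & Eo (iter r fo v) = 0].
Proof.
elim: r => [|r [h4 h3 h2 h1 h0]] /=; first by [].
by rewrite c4f c3f cH2f cHf cEf h4 h3 h2 h1 h0 (lin0 lf) !subr0 addr0.
Qed.

Lemma gar_H r k : Ho (iter k Fo (iter r fo v)) = - (2 * k)%:R *: iter k.-1 Fo (iter r.+1 fo v).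
Proof.
elim: k => [|k IH] /=; first by have [_ _ _ -> _] := gar_k r; rewrite muln0 oppr0 scale0r.
rewrite cHF IH (iter_comm cfF).
case: k IH => [|k] IH /=.
  by rewrite muln0 oppr0 scale0r (lin0 lF); apply: sc3'; ring.
by rewrite (linZ lF); apply: sc3; ring.
Qed.

Lemma gar_E r k : Eo (iter k Fo (iter r fo v)) = - (k * k.-1)%:R *: iter k.-2 Fo (iter r.+1 fo v).
Proof.
elim: k => [|k IH] /=; first by have [_ _ _ _ ->] := gar_k r; rewrite mul0n oppr0 scale0r.
rewrite cEF IH gar_H.
case: k IH => [|[|k]] IH /=.
- by rewrite mul0n oppr0 !scale0r (lin0 lF) add0r.
- by rewrite muln0 oppr0 !scale0r (lin0 lF) add0r.
rewrite (linZ lF) -scalerDl; congr (_ *: _); ring.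
Qed.
Lemma gar_zero N i : iter N Fo v = 0 -> (2 * i <= N)%N ->
  iter (N - 2 * i) Fo (iter i fo v) = 0.
Proof.
move=> h0; elim: i => [|i IH] hi; first by rewrite muln0 subn0.
have hi' : (2 * i <= N)%N by lia.
have := congr1 Eo (IH hi'); rewrite gar_E (lin0 lE) => /eqP.
rewrite scaler_eq0 oppr_eq0 pnatr_eq0 muln_eq0 => /orP [/orP[] /eqP|/eqP]; try lia.
by have -> : (N - 2 * i.+1 = (N - 2 * i).-2)%N by lia.
Qed.
End Garland.

End Gen.
Arguments lin {V}. Arguments lin0 {V P}. Arguments linD {V P}. Arguments linZ {V P}.
Arguments linN {V P}. Arguments linB {V P}. Arguments lin_sum {V P}.
Arguments lin_iter {V P n}. Arguments iter_comm {V P Q n}. Arguments iter_fix0 {V P n}.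
Arguments PQk {V P Q R}. Arguments expand {V P Q R}.


Lemma EE (i j k l : 'I_3) r s :
  E i j r *m E k l s = if j == k then E i l (r + s) else 0.
Proof.
rewrite /E -scalemxAl -scalemxAr scalerA -exprD mul_delta_mx_cond.
by case: (j == k); rewrite ?mulr1n ?mulr0n ?scaler0.
Qed.

Lemma trE (i j : 'I_3) r : i != j -> in_gt (E i j r).
Proof.
move=> hij; rewrite /in_gt /E mxtraceZ /mxtrace.
rewrite big1 ?mulr0 // => k _; rewrite mxE.
case: eqP => [->|] //=; case: eqP => // eij.
by rewrite eij eqxx in hij.
Qed.

Lemma in_gt0 : in_gt 0.
Proof. by rewrite /in_gt mxtrace0. Qed.

Lemma in_gtB a b : in_gt a -> in_gt b -> in_gt (a - b).
Proof. rewrite /in_gt => ha hb. rewrite raddfB /= ha hb subr0. by []. Qed.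

Section Rep.
Variables (V : lmodType algC) (rho : Lt -> V -> V).
Hypothesis hr : is_rep rho.

Lemma rho_v0 a : in_gt a -> rho a 0 = 0.
Proof.
move=> ha; have h := rep_linv hr ha 1 0 0.
rewrite scaler0 addr0 scale1r in h.
by move: (congr1 (fun x => x - rho a 0) h); rewrite subrr addrK => <-.
Qed.

Lemma rhoD a : in_gt a -> forall u w, rho a (u + w) = rho a u + rho a w.
Proof. by move=> ha u w; have := rep_linv hr ha 1 u w; rewrite !scale1r. Qed.

Lemma rhoZ a : in_gt a -> forall c u, rho a (c *: u) = c *: rho a u.
Proof. by move=> ha c u; have := rep_linv hr ha c u 0; rewrite !addr0 rho_v0 // addr0. Qed.

Lemma rhoN a : in_gt a -> forall u, rho a (- u) = - rho a u.
Proof. by move=> ha u; rewrite -scaleN1r rhoZ // scaleN1r. Qed.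

Lemma rho0 u : rho 0 u = 0.
Proof.
have h := rep_lina hr in_gt0 in_gt0 1 u.
rewrite scaler0 addr0 scale1r in h.
by move: (congr1 (fun x => x - rho 0 u) h); rewrite subrr addrK => <-.
Qed.

Lemma rhoS a c u : in_gt a -> rho (c%:P *: a) u = c *: rho a u.
Proof. by move=> ha; have := rep_lina hr ha in_gt0 c u; rewrite !addr0 rho0 addr0. Qed.

Lemma rhoaD a b u : in_gt a -> in_gt b -> rho (a + b) u = rho a u + rho b u.
Proof. by move=> ha hb; have := rep_lina hr ha hb 1 u; rewrite polyC1 !scale1r. Qed.

Lemma rhoaN a u : in_gt a -> rho (- a) u = - rho a u.
Proof. by move=> ha; have := rhoS a (-1) u ha; rewrite polyCN polyC1 !scaleN1r. Qed.

Lemma comm a b u : in_gt a -> in_gt b ->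
  rho a (rho b u) = rho b (rho a u) + rho (a *m b - b *m a) u.
Proof. by move=> ha hb; rewrite (rep_bracket hr ha hb) addrC subrK. Qed.

End Rep.

Lemma dpow0 (V : lmodType algC) (rho : Lt -> V -> V) x s u :
  dpow rho x s u = 0 -> iter s (rho x) u = 0.
Proof.
rewrite /dpow => /eqP; rewrite scaler_eq0 invr_eq0 pnatr_eq0 (gtn_eqF (fact_gt0 s)) /=.
by move/eqP.
Qed.

Definition fs (t : nat * nat * nat) : algC :=
  let: (a, b, c) := t in ((a`! * b`! * c`!)%:R)^-1.
Definition mkL (s : nat * nat * nat) (k : nat) (i : 'I_3) (sj : nat -> nat * nat * nat)
  (cf : nat -> algC) : seq ((nat * nat * nat) * Unm) :=
  [seq (sj j, [:: (fs s * (cf k)^-1 * cf j / fs (sj j), nseq (k - j) i)]) | j <- iota 0 k].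

Lemma fs_neq0 t : fs t != 0.
Proof.
case: t => [[a b] c] /=; rewrite invr_eq0 pnatr_eq0 !muln_eq0.
by rewrite !(gtn_eqF (fact_gt0 _)).
Qed.

Definition sj4 (a b c K j : nat) : nat * nat * nat := (a, j + (b - K), (K + c) - j)%N.
Definition cf4 (c K j : nat) : algC := ('C(K + c, j) * K ^_ j)%:R.
Definition sj5 (a b c K j : nat) : nat * nat * nat := ((K + a) - j, j + (b - K), c)%N.
Definition cf5 (a K j : nat) : algC := (-1) ^+ j * ('C(K + a, j) * K ^_ j)%:R.

Section Main.
Variables (m1 m2 n1 n2 : nat) (V : lmodType algC) (rho : Lt -> V -> V) (v : V).
Hypothesis hr : is_rep rho.
Hypothesis hF : F_rel m1 m2 n1 n2 rho v.

Local Notation F1 := (rho (E 1 0 0)).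
Local Notation F2 := (rho (E 2 1 0)).
Local Notation f1 := (rho (E 1 0 1)).
Local Notation f2 := (rho (E 2 1 1)).
Local Notation f3 := (rho (E 2 0 1)).
Local Notation g := (rho (E 2 0 2)).

Lemma brk a b c u : in_gt a -> in_gt b -> a *m b - b *m a = c ->
  rho a (rho b u) = rho b (rho a u) + rho c u.
Proof. by move=> ha hb <-; rewrite (comm _ _ hr). Qed.

Lemma brk0 a b u : in_gt a -> in_gt b -> a *m b - b *m a = 0 ->
  rho a (rho b u) = rho b (rho a u).
Proof. by move=> ha hb h; rewrite (brk _ _ _ u ha hb h) (rho0 _ _ hr) addr0. Qed.

Lemma brkN a b c u : in_gt a -> in_gt b -> in_gt c -> a *m b - b *m a = - c ->
  rho a (rho b u) = rho b (rho a u) - rho c u.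
Proof. by move=> ha hb hc h; rewrite (brk _ _ _ u ha hb h) (rhoaN _ _ hr). Qed.

Lemma brkNN a b c u : in_gt a -> in_gt b -> in_gt c -> a *m b - b *m a = - c - c ->
  rho a (rho b u) = rho b (rho a u) - rho c u - rho c u.
Proof.
move=> ha hb hc h.
have hNc : in_gt (- c) by rewrite /in_gt raddfN /= hc oppr0.
by rewrite (brk _ _ _ u ha hb h) (rhoaD _ _ hr _ _ _ hNc hNc) (rhoaN _ _ hr _ _ hc) addrA.
Qed.

Lemma gtE (i j : 'I_3) r : i != j -> in_gt (E i j r).
Proof. exact: trE. Qed.

Lemma trEii (i : 'I_3) r : \tr (E i i r) = 'X^r.
Proof.
rewrite /E mxtraceZ /mxtrace (bigD1 i) //= big1 ?mxE ?eqxx ?addr0 ?mulr1 // => k hk.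
by rewrite mxE (negbTE hk).
Qed.
Lemma gth1 r : in_gt (h1 r).
Proof. by rewrite /in_gt /h1 raddfB /= !trEii subrr. Qed.
Lemma gth2 r : in_gt (h2 r).
Proof. by rewrite /in_gt /h2 raddfB /= !trEii subrr. Qed.

Ltac ing := solve [apply: gtE; by [] | exact: gth1 | exact: gth2].
Ltac mxt := rewrite /h1 /h2 ?mulmxBl ?mulmxBr !EE /= ?sub0r ?subr0 ?subrr ?oppr0; try done.

Lemma linE (a : Lt) : in_gt a -> lin (rho a).
Proof. by move=> ha c x y; rewrite (rep_linv hr ha). Qed.

Section Rels.
Variable u : V.
Lemma c21 : f2 (f1 u) = f1 (f2 u) + g u.
Proof. by apply: brk; [ing|ing|mxt]. Qed.
Lemma cg1 : g (f1 u) = f1 (g u). Proof. by apply: brk0; [ing|ing|mxt]. Qed.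
Lemma cg2 : g (f2 u) = f2 (g u). Proof. by apply: brk0; [ing|ing|mxt]. Qed.
Lemma cg3 : g (f3 u) = f3 (g u). Proof. by apply: brk0; [ing|ing|mxt]. Qed.
Lemma c31 : f3 (f1 u) = f1 (f3 u). Proof. by apply: brk0; [ing|ing|mxt]. Qed.
Lemma c32 : f3 (f2 u) = f2 (f3 u). Proof. by apply: brk0; [ing|ing|mxt]. Qed.
Lemma c2F1 : f2 (F1 u) = F1 (f2 u) + f3 u. Proof. by apply: brk; [ing|ing|mxt]. Qed.
Lemma c3F1 : f3 (F1 u) = F1 (f3 u). Proof. by apply: brk0; [ing|ing|mxt]. Qed.
Lemma c1F2 : f1 (F2 u) = F2 (f1 u) - f3 u. Proof. by apply: brkN; [ing|ing|ing|mxt]. Qed.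
Lemma c3F2 : f3 (F2 u) = F2 (f3 u). Proof. by apply: brk0; [ing|ing|mxt]. Qed.
Lemma ga1 : rho (E 0 1 1) (F1 u) = F1 (rho (E 0 1 1) u) + rho (h1 1) u.
Proof. by apply: brk; [ing|ing|mxt]. Qed.
Lemma ga2 : rho (h1 1) (F1 u) = F1 (rho (h1 1) u) - f1 u - f1 u.
Proof. by apply: brkNN; [ing|ing|ing|mxt]. Qed.
Lemma ga3 : f1 (F1 u) = F1 (f1 u).
Proof. by apply: brk0; [ing|ing|mxt]. Qed.
Lemma ga4 : rho (E 0 1 1) (f1 u) = f1 (rho (E 0 1 1) u) + rho (h1 2) u.
Proof. by apply: brk; [ing|ing|mxt]. Qed.
Lemma ga5 : rho (h1 2) (f1 u) = f1 (rho (h1 2) u) - rho (E 1 0 3) u - rho (E 1 0 3) u.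
Proof. by apply: brkNN; [ing|ing|ing|mxt]. Qed.
Lemma ga6 : rho (h1 1) (f1 u) = f1 (rho (h1 1) u) - rho (E 1 0 2) u - rho (E 1 0 2) u.
Proof. by apply: brkNN; [ing|ing|ing|mxt]. Qed.
Lemma ga7 : rho (E 1 0 2) (f1 u) = f1 (rho (E 1 0 2) u).
Proof. by apply: brk0; [ing|ing|mxt]. Qed.
Lemma ga8 : rho (E 1 0 3) (f1 u) = f1 (rho (E 1 0 3) u).
Proof. by apply: brk0; [ing|ing|mxt]. Qed.
Lemma gb1 : rho (E 1 2 1) (F2 u) = F2 (rho (E 1 2 1) u) + rho (h2 1) u.
Proof. by apply: brk; [ing|ing|mxt]. Qed.
Lemma gb2 : rho (h2 1) (F2 u) = F2 (rho (h2 1) u) - f2 u - f2 u.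
Proof. by apply: brkNN; [ing|ing|ing|mxt]. Qed.
Lemma gb3 : f2 (F2 u) = F2 (f2 u).
Proof. by apply: brk0; [ing|ing|mxt]. Qed.
Lemma gb4 : rho (E 1 2 1) (f2 u) = f2 (rho (E 1 2 1) u) + rho (h2 2) u.
Proof. by apply: brk; [ing|ing|mxt]. Qed.
Lemma gb5 : rho (h2 2) (f2 u) = f2 (rho (h2 2) u) - rho (E 2 1 3) u - rho (E 2 1 3) u.
Proof. by apply: brkNN; [ing|ing|ing|mxt]. Qed.
Lemma gb6 : rho (h2 1) (f2 u) = f2 (rho (h2 1) u) - rho (E 2 1 2) u - rho (E 2 1 2) u.
Proof. by apply: brkNN; [ing|ing|ing|mxt]. Qed.
Lemma gb7 : rho (E 2 1 2) (f2 u) = f2 (rho (E 2 1 2) u).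
Proof. by apply: brk0; [ing|ing|mxt]. Qed.
Lemma gb8 : rho (E 2 1 3) (f2 u) = f2 (rho (E 2 1 3) u).
Proof. by apply: brk0; [ing|ing|mxt]. Qed.
Lemma ce1a : rho (E 0 1 0) (f3 u) = f3 (rho (E 0 1 0) u) - f2 u.
Proof. by apply: brkN; [ing|ing|ing|mxt]. Qed.
Lemma ce1b : rho (E 0 1 0) (f2 u) = f2 (rho (E 0 1 0) u).
Proof. by apply: brk0; [ing|ing|mxt]. Qed.
Lemma ce2a : rho (E 1 2 0) (f1 u) = f1 (rho (E 1 2 0) u).
Proof. by apply: brk0; [ing|ing|mxt]. Qed.
Lemma ce2b : rho (E 1 2 0) (f3 u) = f3 (rho (E 1 2 0) u) + f1 u.
Proof. by apply: brk; [ing|ing|mxt]. Qed.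
Lemma ce2c : rho (E 1 2 0) (f2 u) = f2 (rho (E 1 2 0) u) + rho (h2 1) u.
Proof. by apply: brk; [ing|ing|mxt]. Qed.
End Rels.

Lemma kpos (i j : 'I_3) r : (i < j)%N -> rho (E i j r) v = 0.
Proof. by case: hF => h _ _ _; exact: h. Qed.
Lemma kh1 r : r != 0%N -> rho (h1 r) v = 0.
Proof. by case: hF => _ h _ _ hr0; rewrite h (negbTE hr0) scale0r. Qed.
Lemma kh2 r : r != 0%N -> rho (h2 r) v = 0.
Proof. by case: hF => _ _ h _ hr0; rewrite h (negbTE hr0) scale0r. Qed.
Lemma k10 r : (2 <= r)%N -> rho (E 1 0 r) v = 0.
Proof. by case: hF => _ _ _ [[_ _ h] _ _]; exact: h. Qed.
Lemma k21 r : (2 <= r)%N -> rho (E 2 1 r) v = 0.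
Proof. by case: hF => _ _ _ [_ [_ _ h] _]; exact: h. Qed.
Lemma k20 r : (2 <= r)%N -> rho (E 2 0 r) v = 0.
Proof. by case: hF => _ _ _ [_ _ [_ _ h]]; exact: h. Qed.
Lemma RF1 : iter (m1 + n1).+1 F1 v = 0.
Proof. by case: hF => _ _ _ [[h _ _] _ _]; exact: dpow0 h. Qed.
Lemma Rf1 : iter (minn m1 n1).+1 f1 v = 0.
Proof. by case: hF => _ _ _ [[_ h _] _ _]; exact: dpow0 h. Qed.
Lemma RF2 : iter (m2 + n2).+1 F2 v = 0.
Proof. by case: hF => _ _ _ [_ [h _ _] _]; exact: dpow0 h. Qed.
Lemma Rf2 : iter (minn m2 n2).+1 f2 v = 0.
Proof. by case: hF => _ _ _ [_ [_ h _] _]; exact: dpow0 h. Qed.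
Lemma Rf3 : iter (minn (m1 + m2) (n1 + n2)).+1 f3 v = 0.
Proof. by case: hF => _ _ _ [_ _ [_ h _]]; exact: dpow0 h. Qed.

Definition A (a b c : nat) := iter a f1 (iter b f3 (iter c f2 v)).

Lemma lf1 : lin f1. Proof. by apply: linE; ing. Qed.
Lemma lf2 : lin f2. Proof. by apply: linE; ing. Qed.
Lemma lf3 : lin f3. Proof. by apply: linE; ing. Qed.
Lemma lF1 : lin F1. Proof. by apply: linE; ing. Qed.
Lemma lF2 : lin F2. Proof. by apply: linE; ing. Qed.
Lemma lg : lin g. Proof. by apply: linE; ing. Qed.

Lemma gA a b c : g (A a b c) = 0.
Proof.
rewrite /A (iter_comm cg1) (iter_comm cg3) (iter_comm cg2) k20 //.
by rewrite (iter_fix0 (lin0 lf2)) (iter_fix0 (lin0 lf3)) (iter_fix0 (lin0 lf1)).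
Qed.

Lemma f1A a b c : f1 (A a b c) = A a.+1 b c. Proof. by []. Qed.
Lemma f3A a b c : f3 (A a b c) = A a b.+1 c. Proof. by rewrite /A (iter_comm c31). Qed.
Lemma f2A a b c : f2 (A a b c) = A a b c.+1.
Proof.
rewrite /A; elim: a => [|a IH] /=.
  by rewrite (iter_comm (fun u => esym (c32 u))).
by rewrite c21 IH -/(A a b c) gA addr0.
Qed.
Lemma itf2A z a b c : iter z f2 (A a b c) = A a b (c + z).
Proof. by elim: z => [|z IH]; rewrite ?addn0 //= IH f2A addnS. Qed.
Lemma itf3A z a b c : iter z f3 (A a b c) = A a (b + z) c.
Proof. by elim: z => [|z IH]; rewrite ?addn0 //= IH f3A addnS. Qed.
Lemma itf1A z a b c : iter z f1 (A a b c) = A (a + z) b c.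
Proof. by elim: z => [|z IH]; rewrite ?addn0 //= IH f1A addnS. Qed.

Lemma G1 a : (2 * a <= (m1 + n1).+1)%N -> iter ((m1 + n1).+1 - 2 * a) F1 (A a 0 0) = 0.
Proof.
move=> ha.
apply: (@gar_zero V _ _ _ _ _ _ _ v (linE _ (gtE 0 1 1 isT)) lF1 lf1
   ga1 ga2 ga3 ga4 ga5 ga6 ga7 ga8) => //.
- exact: kpos.
- exact: kh1.
- exact: kh1.
- exact: k10.
- exact: k10.
- exact: RF1.
Qed.

Lemma G2 c : (2 * c <= (m2 + n2).+1)%N -> iter ((m2 + n2).+1 - 2 * c) F2 (A 0 0 c) = 0.
Proof.
move=> hc.
apply: (@gar_zero V _ _ _ _ _ _ _ v (linE _ (gtE 1 2 1 isT)) lF2 lf2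
   gb1 gb2 gb3 gb4 gb5 gb6 gb7 gb8) => //.
- exact: kpos.
- exact: kh2.
- exact: kh2.
- exact: k21.
- exact: k21.
- exact: RF2.
Qed.

Local Notation e1 := (rho (E 0 1 0)).
Local Notation e2 := (rho (E 1 2 0)).

Lemma le1 : lin e1. Proof. by apply: linE; ing. Qed.
Lemma le2 : lin e2. Proof. by apply: linE; ing. Qed.

Lemma e1A k m : e1 (A 0 k m) = - k%:R *: A 0 k.-1 m.+1.
Proof.
have h0 : e1 (iter m f2 v) = 0.
  by rewrite (iter_comm ce1b) kpos // (iter_fix0 (lin0 lf2)).
have hPQ : forall y, e1 (f3 y) = f3 (e1 y) + (fun y => - f2 y) y.
  by move=> y; rewrite ce1a.
have hRQ : forall y, (fun y => - f2 y) (f3 y) = f3 ((fun y => - f2 y) y).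
  by move=> y /=; rewrite (linN lf3) c32.
rewrite /A /= (PQk lf3 hPQ hRQ) h0 (iter_fix0 (lin0 lf3)) add0r.
by rewrite (linN (lin_iter lf3)) scalerN scaleNr.
Qed.

Lemma Z3a q : (q <= (minn (m1 + m2) (n1 + n2)).+1)%N ->
  A 0 ((minn (m1 + m2) (n1 + n2)).+1 - q) q = 0.
Proof.
set N := (minn _ _).+1.
elim: q => [|q IH] hq; first by rewrite subn0; exact: Rf3.
have := congr1 (fun x => e1 x) (IH (ltnW hq)); rewrite /= e1A (lin0 le1) => /eqP.
rewrite scaler_eq0 oppr_eq0 pnatr_eq0 => /orP [/eqP|/eqP]; first by lia.
by have -> : (N - q.+1 = (N - q).-1)%N by lia.
Qed.

Lemma e2f2 m : e2 (iter m f2 v) = 0 /\ rho (h2 1) (iter m f2 v) = 0.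
Proof.
elim: m => [|m [IH1 IH2]] /=; first by rewrite kpos // kh2.
have k3' : rho (E 2 1 2) (iter m f2 v) = 0.
  by rewrite (iter_comm gb7) k21 // (iter_fix0 (lin0 lf2)).
by rewrite ce2c gb6 IH1 IH2 k3' (lin0 lf2) !subr0 add0r.
Qed.

Lemma e2A p k m : e2 (A p k m) = k%:R *: A p.+1 k.-1 m.
Proof.
have hRQ : forall y, f1 (f3 y) = f3 (f1 y) by move=> y; rewrite c31.
rewrite /A (iter_comm ce2a) (PQk lf3 ce2b hRQ).
have [-> _] := e2f2 m; rewrite (iter_fix0 (lin0 lf3)) add0r.
by rewrite (linZ (lin_iter lf1)) -(iter_comm hRQ) -iterSr.
Qed.

Lemma Z3b p q : (p + q <= (minn (m1 + m2) (n1 + n2)).+1)%N ->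
  A p ((minn (m1 + m2) (n1 + n2)).+1 - q - p) q = 0.
Proof.
set N := (minn _ _).+1.
elim: p => [|p IH] hpq; first by rewrite subn0; apply: Z3a; lia.
have := congr1 (fun x => e2 x) (IH (ltnW hpq)); rewrite /= e2A.
rewrite (lin0 le2) => /eqP.
rewrite scaler_eq0 pnatr_eq0 => /orP [/eqP|/eqP]; first by lia.
by have -> : (N - q - p.+1 = (N - q - p).-1)%N by lia.
Qed.

Lemma Z1 a b c : (minn m1 n1 < a)%N -> A a b c = 0.
Proof.
move=> ha.
have e : A a b c = iter c f2 (iter b f3 (A a 0 0)) by rewrite itf3A itf2A !add0n.
have h0 : A a 0 0 = 0.
  rewrite /A /= -(subnK ha) iterD Rf1.
  exact: (iter_fix0 (lin0 lf1)).
by rewrite e h0 (iter_fix0 (lin0 lf3)) (iter_fix0 (lin0 lf2)).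
Qed.

Lemma Z2 a b c : (minn m2 n2 < c)%N -> A a b c = 0.
Proof.
move=> hc; rewrite /A -(subnK hc) iterD Rf2.
by rewrite (iter_fix0 (lin0 lf2)) (iter_fix0 (lin0 lf3)) (iter_fix0 (lin0 lf1)).
Qed.

Lemma Z3 a b c : (minn (m1 + m2) (n1 + n2) < a + b + c)%N -> A a b c = 0.
Proof.
set N := (minn _ _).+1 => habc.
set p := minn a N; set q := minn c (N - p); set r := (N - q - p)%N.
have e : A a b c = iter (a - p) f1 (iter (b - r) f3 (iter (c - q) f2 (A p r q))).
  rewrite itf2A itf3A itf1A; congr A; rewrite /p /q /r; lia.
rewrite e Z3b; last by rewrite /p /q; lia.
by rewrite (iter_fix0 (lin0 lf2)) (iter_fix0 (lin0 lf3)) (iter_fix0 (lin0 lf1)).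
Qed.

Definition A3 (t : nat * nat * nat) := let: (a, b, c) := t in A a b c.

Lemma sum_trunc (F : nat -> V) n K : (K <= n)%N -> (forall j, (K < j)%N -> F j = 0) ->
  \sum_(j < n.+1) F j = \sum_(j < K.+1) F j.
Proof.
move=> hKn hFz.
rewrite -(big_mkord xpredT F) -(big_mkord xpredT F).
have hK1 : (K.+1 <= n.+1)%N by [].
rewrite (big_cat_nat (leq0n K.+1) hK1) /= [X in _ + X]big1_seq ?addr0 // => j /andP[_].
by rewrite mem_index_iota => /andP[hj _]; exact: hFz.
Qed.

Lemma itf3F1 e m x : iter e f3 (iter m F1 x) = iter m F1 (iter e f3 x).
Proof.
have h : forall y, iter e f3 (F1 y) = F1 (iter e f3 y).
  by move=> y; rewrite (iter_comm (fun y => esym (c3F1 y))).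
exact: (iter_comm h).
Qed.
Lemma itf3F2 e m x : iter e f3 (iter m F2 x) = iter m F2 (iter e f3 x).
Proof.
have h : forall y, iter e f3 (F2 y) = F2 (iter e f3 y).
  by move=> y; rewrite (iter_comm (fun y => esym (c3F2 y))).
exact: (iter_comm h).
Qed.

Lemma Z4 a b c : (a <= minn m1 n1)%N -> ((m1 + n1).+1 - 2 * a <= b)%N ->
  let K := ((m1 + n1).+1 - 2 * a)%N in
  \sum_(j < K.+1) ('C(K + c, j) * K ^_ j)%:R *:
     iter (K - j) F1 (A3 (a, j + (b - K), (K + c) - j)%N) = 0.
Proof.
move=> ha hb K.
have h0 : iter (b - K) f3 (iter (K + c) f2 (iter K F1 (A a 0 0))) = 0.
  rewrite G1; last by lia.
  by rewrite (iter_fix0 (lin0 lf2)) (iter_fix0 (lin0 lf3)).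
rewrite -[in RHS]h0 (expand lf2 lF1 lf3 c2F1 c3F1 (fun y => esym (c32 y))).
rewrite (lin_sum (lin_iter lf3)).
rewrite (sum_trunc (fun j : nat => iter (b - K) f3 (('C(K + c, j) * K ^_ j)%:R *:
   iter (K - j) F1 (iter j f3 (iter (K + c - j) f2 (A a 0 0))))) _ _ (leq_addr c K)).
  apply: eq_bigr => j _; rewrite (linZ (lin_iter lf3)) itf3F1 itf2A itf3A itf3A /=.
  by rewrite !add0n addnC.
move=> j hj; rewrite (ffact_small hj) muln0 scale0r.
by rewrite (lin0 (lin_iter lf3)).
Qed.

Lemma iterN (P : V -> V) j x : lin P -> iter j (fun y => - P y) x = (-1) ^+ j *: iter j P x.
Proof.
move=> hP; elim: j => [|j IH] /=; first by rewrite expr0 scale1r.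
by rewrite IH (linZ hP) exprS -scaleN1r scalerA.
Qed.

Lemma Z5 a b c : (c <= minn m2 n2)%N -> ((m2 + n2).+1 - 2 * c <= b)%N ->
  let K := ((m2 + n2).+1 - 2 * c)%N in
  \sum_(j < K.+1) ((-1) ^+ j * ('C(K + a, j) * K ^_ j)%:R) *:
     iter (K - j) F2 (A3 ((K + a) - j, j + (b - K), c)%N) = 0.
Proof.
move=> hc hb K.
have h0 : iter (b - K) f3 (iter (K + a) f1 (iter K F2 (A 0 0 c))) = 0.
  rewrite G2; last by lia.
  by rewrite (iter_fix0 (lin0 lf1)) (iter_fix0 (lin0 lf3)).
have lR : lin (fun y => - f3 y).
  by move=> x y z; rewrite (linD lf3) (linZ lf3) opprD scalerN.
have hRQ : forall y, (fun y => - f3 y) (F2 y) = F2 ((fun y => - f3 y) y).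
  by move=> y /=; rewrite (linN lF2) c3F2.
have hPR : forall y, f1 ((fun y => - f3 y) y) = (fun y => - f3 y) (f1 y).
  by move=> y /=; rewrite (linN lf1) c31.
rewrite -[in RHS]h0 (expand lf1 lF2 lR c1F2 hRQ hPR).
rewrite (lin_sum (lin_iter lf3)).
rewrite (sum_trunc (fun j : nat => iter (b - K) f3 (('C(K + a, j) * K ^_ j)%:R *:
   iter (K - j) F2 (iter j (fun y => - f3 y) (iter (K + a - j) f1 (A 0 0 c))))) _ _ (leq_addr a K)).
  apply: eq_bigr => j _; rewrite (linZ (lin_iter lf3)) itf3F2 (iterN _ _ _ lf3).
  rewrite itf1A (linZ (lin_iter lf3)) (linZ (lin_iter lF2)) itf3A itf3A /= scalerA mulrC.
  by rewrite !add0n addnC.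
move=> j hj; rewrite (ffact_small hj) muln0 scale0r.
by rewrite (lin0 (lin_iter lf3)).
Qed.

Lemma gt_nm (i : 'I_3) : in_gt (nm_gen i).
Proof. by rewrite /nm_gen; case: ifP => _; [|case: ifP => _]; ing. Qed.

Lemma XsA t : Xs rho t v = fs t *: A3 t.
Proof.
case: t => [[a b] c]; rewrite /Xs /dpow /= /A.
rewrite (linZ (lin_iter lf3)) (linZ (lin_iter lf1)) scalerA (linZ (lin_iter lf1)) scalerA.
by rewrite !natrM !invfM.
Qed.

Lemma word_nseq m i u : word_act rho (nseq m i) u = iter m (rho (nm_gen i)) u.
Proof. by elim: m => [|m IH] //=; rewrite -IH. Qed.

Lemma finish (s : nat * nat * nat) (k : nat) (i : 'I_3) (sj : nat -> nat * nat * nat)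
  (cf : nat -> algC) :
  cf k != 0 -> sj k = s ->
  \sum_(j < k.+1) cf j *: iter (k - j) (rho (nm_gen i)) (A3 (sj j)) = 0 ->
  Xs rho s v + \sum_(p <- mkL s k i sj cf) Unm_act rho p.2 (Xs rho p.1 v) = 0.
Proof.
move=> hk hs.
have lQ := linE _ (gt_nm i).
rewrite big_ord_recr /= subnn hs => hsum.
rewrite /mkL big_map.
have -> : \sum_(j <- iota 0 k) Unm_act rho
        [:: (fs s * (cf k)^-1 * cf j / fs (sj j), nseq (k - j) i)] (Xs rho (sj j) v)
   = (fs s * (cf k)^-1) *: \sum_(j < k) cf j *: iter (k - j) (rho (nm_gen i)) (A3 (sj j)).
  rewrite scaler_sumr -(big_mkord xpredT (fun j => (fs s * (cf k)^-1) *: (cf j *: iter (k - j) (rho (nm_gen i)) (A3 (sj j))))).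
  rewrite /index_iota subn0; apply: eq_bigr => j _.
  rewrite /Unm_act big_cons big_nil addr0 /= word_nseq XsA (linZ (lin_iter lQ)) !scalerA.
  by congr (_ *: _); rewrite divfK // fs_neq0.
have -> : \sum_(j < k) cf j *: iter (k - j) (rho (nm_gen i)) (A3 (sj j)) = - (cf k *: A3 s).
  by apply/eqP; rewrite -addr_eq0; apply/eqP; exact: hsum.
by rewrite XsA scalerN scalerA -mulrA mulVf // mulr1 subrr.
Qed.

Lemma case0 s : A3 s = 0 ->
  Xs rho s v + \sum_(p <- [::]) Unm_act rho p.2 (Xs rho p.1 v) = 0.
Proof. by move=> h; rewrite big_nil addr0 XsA h scaler0. Qed.

Lemma case4 a b c : (a <= minn m1 n1)%N -> ((m1 + n1).+1 - 2 * a <= b)%N ->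
  Xs rho (a, b, c) v + \sum_(p <- mkL (a, b, c) ((m1 + n1).+1 - 2 * a) 0
       (sj4 a b c ((m1 + n1).+1 - 2 * a)) (cf4 c ((m1 + n1).+1 - 2 * a)))
     Unm_act rho p.2 (Xs rho p.1 v) = 0.
Proof.
move=> ha hb; apply: finish.
- rewrite /cf4 pnatr_eq0 muln_eq0 negb_or -!lt0n bin_gt0 leq_addr /=.
  by rewrite ffact_gt0.
- by rewrite /sj4 addKn subnKC.
- by have := Z4 a b c ha hb.

Qed.

Lemma case5 a b c : (c <= minn m2 n2)%N -> ((m2 + n2).+1 - 2 * c <= b)%N ->
  Xs rho (a, b, c) v + \sum_(p <- mkL (a, b, c) ((m2 + n2).+1 - 2 * c) 1
       (sj5 a b c ((m2 + n2).+1 - 2 * c)) (cf5 a ((m2 + n2).+1 - 2 * c)))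
     Unm_act rho p.2 (Xs rho p.1 v) = 0.
Proof.
move=> hc hb; apply: finish.
- rewrite /cf5 mulf_eq0 negb_or signr_eq0 /= pnatr_eq0 muln_eq0 negb_or -!lt0n bin_gt0 leq_addr /=.
  by rewrite ffact_gt0.
- by rewrite /sj5 addKn subnKC.
- by have := Z5 a b c hc hb.

Qed.

End Main.

Theorem proposition4p1 (m1 m2 n1 n2 : nat) (s : nat * nat * nat) :
  ~~ inSA m1 m2 n1 n2 s ->
  exists L : seq ((nat * nat * nat) * Unm),
    all (fun p => prec3 p.1 s) L /\
    forall (V : lmodType algC) (rho : Lt -> V -> V) (v : V),
      is_rep rho -> F_rel m1 m2 n1 n2 rho v ->
      Xs rho s v + \sum_(p <- L) Unm_act rho p.2 (Xs rho p.1 v) = 0.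
Proof.
case: s => [[a b c]] hs.
have [h1|h1] := ltnP (minn m1 n1) a.
  exists [::]; split => // V rho v hr hF; apply: case0 => //; exact: (Z1 m1 m2 n1 n2 V rho v hr hF a b c h1).
have [h2|h2] := ltnP (minn m2 n2) c.
  exists [::]; split => // V rho v hr hF; apply: case0 => //; exact: (Z2 m1 m2 n1 n2 V rho v hr hF a b c h2).
have [h3|h3] := ltnP (minn (m1 + m2) (n1 + n2)) (a + b + c).
  exists [::]; split => // V rho v hr hF; apply: case0 => //; exact: (Z3 m1 m2 n1 n2 V rho v hr hF a b c h3).
have [h4|h4] := ltnP (m1 + n1) (2 * a + b).
  have hb : ((m1 + n1).+1 - 2 * a <= b)%N by lia.
  exists (mkL (a, b, c) ((m1 + n1).+1 - 2 * a) 0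
       (sj4 a b c ((m1 + n1).+1 - 2 * a)) (cf4 c ((m1 + n1).+1 - 2 * a))).
  split; last by move=> V rho v hr hF; exact: (case4 m1 m2 n1 n2 V rho v hr hF a b c h1 hb).
  rewrite /mkL all_map; apply/allP => j; rewrite mem_iota add0n => /andP [_ hj] /=.
  by rewrite /sj4 /prec3 /succ3; apply/orP; left; lia.
have h5 : (m2 + n2 < 2 * c + b)%N.
  by move: hs; rewrite /inSA h1 h2 h3 h4 /= -ltnNge.
have hb : ((m2 + n2).+1 - 2 * c <= b)%N by lia.
exists (mkL (a, b, c) ((m2 + n2).+1 - 2 * c) 1
       (sj5 a b c ((m2 + n2).+1 - 2 * c)) (cf5 a ((m2 + n2).+1 - 2 * c))).
split; last by move=> V rho v hr hF; exact: (case5 m1 m2 n1 n2 V rho v hr hF a b c h2 hb).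
rewrite /mkL all_map; apply/allP => j; rewrite mem_iota add0n => /andP [_ hj] /=.
by rewrite /sj5 /prec3 /succ3 eqxx /=; apply/orP; right; apply/orP; left; lia.
Qed.
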